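(* Let $n\ge 1$ be an integer, let $g_i:[0,n]\to\mathbb{R}_{\ge 0}$ be a non-decreasing function and let $c_i\in\mathbb{R}$. For $z\in\{0,1,\ldots,n-1\}$ say that investing is a best response to $z$ if $g_i(1+z)-c_i\ge g_i(z)$. Then there exists a unique set $D_i\subseteq\{0,1,\ldots,n-1\}$ such that, for every $z\in\{0,\ldots,n-1\}$, investing is a best response to $z$ if and only if $z\in D_i$. Furthermore: (1) if $g_i$ is concave, $D_i$ is a downward-closed interval; (2) if $g_i$ is convex, $D_i$ is an upward-closed interval; (3) if $g_i$ is sigmoid, $D_i$ is an interval. Conversely, for every set $D_i\subseteq\{0,1,\ldots,n-1\}$ there exist a non-decreasing function $g_i:[0,n]\to\mathbb{R}_{\ge 0}$ and a cost $c_i$ such that, for every $z\in\{0,\ldots,n-1\}$, investing is a best response to $z$ if and only if $z\in D_i$. Furthermore: (1) if $D_i$ is a downward-closed interval, such a $g_i$ can be chosen concave; (2) if $D_i$ is an upward-closed interval, such a $g_i$ can be chosen convex; (3) if $D_i$ is an interval, such a $g_i$ can be chosen sigmoid.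
   Context: This models a player $i$ in a binary networked public goods game: if $i$ chooses $x_i\in\{0,1\}$ and $z$ of her network neighbors invest, her utility is $U_i(x_i,z)=g_i(x_i+z)-c_ix_i$; ties are broken in favor of investing, so investing is a best response to $z$ iff $U_i(1,z)\ge U_i(0,z)$. An interval means a set of consecutive integers in $\{0,\ldots,n-1\}$ (possibly empty); downward-closed means $z\in D_i$ and $0\le z'<z$ imply $z'\in D_i$; upward-closed means $z\in D_i$ and $z<z'\le n-1$ imply $z'\in D_i$. A function $g_i$ is called (generalized) sigmoid if there is some $\hat z\in[-\infty,\infty]$ such that $g_i$ is convex on $\{z:z\le\hat z\}$ and concave on $\{z:z\ge\hat z\}$ (so concave and convex functions are special cases). *)

(* Defs.v *)
From HB Require Import structures.
From mathcomp Require Import all_boot all_order all_algebra.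
From mathcomp Require Import reals constructive_ereal.
Set Implicit Arguments. Unset Strict Implicit. Unset Printing Implicit Defensive.
Import Order.TTheory GRing.Theory Num.Theory.
Local Open Scope ring_scope.

Section Defs.
Variable R : realType.

Definition in0n (n : nat) (x : R) : Prop := 0 <= x /\ x <= n%:R.

Definition nondecr_on (n : nat) (g : R -> R) : Prop :=
  forall x y, 0 <= x -> x <= y -> y <= n%:R -> g x <= g y.

Definition nonneg_on (n : nat) (g : R -> R) : Prop :=
  forall x, in0n n x -> 0 <= g x.

Definition convex_on (S : R -> Prop) (g : R -> R) : Prop :=
  forall x y t, S x -> S y -> 0 <= t -> t <= 1 ->
    g (t * x + (1 - t) * y) <= t * g x + (1 - t) * g y.

Definition concave_on (S : R -> Prop) (g : R -> R) : Prop :=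
  forall x y t, S x -> S y -> 0 <= t -> t <= 1 ->
    t * g x + (1 - t) * g y <= g (t * x + (1 - t) * y).

Definition convex_fun (n : nat) (g : R -> R) := convex_on (in0n n) g.
Definition concave_fun (n : nat) (g : R -> R) := concave_on (in0n n) g.

(* generalized sigmoid: some zhat in [-oo, +oo] such that g is convex on
   {z <= zhat} and concave on {z >= zhat} (within the domain [0,n]) *)
Definition sigmoid_fun (n : nat) (g : R -> R) : Prop :=
  exists zh : \bar R,
    convex_on (fun z => in0n n z /\ (z%:E <= zh)%E) g /\
    concave_on (fun z => in0n n z /\ (zh <= z%:E)%E) g.

Definition best_response (g : R -> R) (c : R) (z : nat) : Prop :=
  g (1 + z%:R) - c >= g z%:R.

Definition BR_set (n : nat) (g : R -> R) (c : R) (D : {set 'I_n}) : Prop :=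
  forall z : 'I_n, best_response g c z <-> z \in D.

End Defs.

Definition is_interval (n : nat) (D : {set 'I_n}) : Prop :=
  forall a b c : 'I_n, (a <= b)%N -> (b <= c)%N -> a \in D -> c \in D -> b \in D.

Definition down_closed (n : nat) (D : {set 'I_n}) : Prop :=
  forall a b : 'I_n, (a < b)%N -> b \in D -> a \in D.

Definition up_closed (n : nat) (D : {set 'I_n}) : Prop :=
  forall a b : 'I_n, (a < b)%N -> a \in D -> b \in D.

Arguments BR_set {R} n g c D.

(* Main.v *)
Require Import Defs.
From HB Require Import structures.
From mathcomp Require Import all_boot all_order all_algebra.
From mathcomp Require Import reals constructive_ereal.
From mathcomp Require Import ring lra zify.
Import Order.TTheory GRing.Theory Num.Theory.
Local Open Scope ring_scope.

Section Aux.
Variable R : realType.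
Implicit Types (g : R -> R) (S : R -> Prop).

Definition dd g (k : nat) : R := g (1 + k%:R) - g k%:R.

Lemma br_iff g c (z : nat) : best_response g c z <-> c <= dd g z.
Proof. rewrite /best_response /dd; split => H; lra. Qed.

Lemma conv_mid S g x y z : convex_on S g -> S x -> S z -> x < y -> y < z ->
  g y * (z - x) <= (z - y) * g x + (y - x) * g z.
Proof.
move=> H Sx Sz xy yz.
have zx : 0 < z - x by lra.
have zx0 : z - x != 0 by rewrite gt_eqF.
pose t := (z - y) / (z - x).
have t0 : 0 <= t by rewrite /t divr_ge0 //; lra.
have t1 : t <= 1 by rewrite /t ler_pdivrMr // mul1r; lra.
have e1 : t * (z - x) = z - y by rewrite /t divfK.
have ey : t * x + (1 - t) * z = y.
  have: t * x + (1 - t) * z = z - t * (z - x) by rewrite mulrBr mulrBl mul1r; lra.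
  by rewrite e1 => ->; ring.
clearbody t.
have := H x z t Sx Sz t0 t1; rewrite ey => Hg.
have e : (t * g x + (1 - t) * g z) * (z - x) = (z - y) * g x + (y - x) * g z.
  have e2 : (1 - t) * (z - x) = y - x by rewrite mulrBl mul1r e1; lra.
  rewrite -e1 -e2; ring.
by rewrite -e ler_wpM2r // ltW.
Qed.

Lemma conc_mid S g x y z : concave_on S g -> S x -> S z -> x < y -> y < z ->
  (z - y) * g x + (y - x) * g z <= g y * (z - x).
Proof.
move=> H Sx Sz xy yz.
have zx : 0 < z - x by lra.
have zx0 : z - x != 0 by rewrite gt_eqF.
pose t := (z - y) / (z - x).
have t0 : 0 <= t by rewrite /t divr_ge0 //; lra.
have t1 : t <= 1 by rewrite /t ler_pdivrMr // mul1r; lra.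
have e1 : t * (z - x) = z - y by rewrite /t divfK.
have ey : t * x + (1 - t) * z = y.
  have: t * x + (1 - t) * z = z - t * (z - x) by rewrite mulrBr mulrBl mul1r; lra.
  by rewrite e1 => ->; ring.
clearbody t.
have := H x z t Sx Sz t0 t1; rewrite ey => Hg.
have e : (t * g x + (1 - t) * g z) * (z - x) = (z - y) * g x + (y - x) * g z.
  have e2 : (1 - t) * (z - x) = y - x by rewrite mulrBl mul1r e1; lra.
  rewrite -e1 -e2; ring.
by rewrite -e ler_wpM2r // ltW.
Qed.

Lemma conv_step S g k : convex_on S g -> S k%:R -> S k.+2%:R -> dd g k <= dd g k.+1.
Proof.
move=> H S0 S2; rewrite -!nat1r in S2.
have := @conv_mid S g k%:R (1 + k%:R) (1 + (1 + k%:R)) H S0 S2.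
rewrite /dd -!nat1r; set x := k%:R => h.
have := h ltac:(lra) ltac:(lra).
have -> : 1 + (1 + x) - x = 2 by ring.
have -> : 1 + (1 + x) - (1 + x) = 1 by ring.
have -> : 1 + x - x = 1 by ring.
lra.
Qed.

Lemma conc_step S g k : concave_on S g -> S k%:R -> S k.+2%:R -> dd g k.+1 <= dd g k.
Proof.
move=> H S0 S2; rewrite -!nat1r in S2.
have := @conc_mid S g k%:R (1 + k%:R) (1 + (1 + k%:R)) H S0 S2.
rewrite /dd -!nat1r; set x := k%:R => h.
have := h ltac:(lra) ltac:(lra).
have -> : 1 + (1 + x) - x = 2 by ring.
have -> : 1 + (1 + x) - (1 + x) = 1 by ring.
have -> : 1 + x - x = 1 by ring.
lra.
Qed.

Lemma chain_up (f : nat -> R) a b :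
  (forall k, (a <= k)%N -> (k < b)%N -> f k <= f k.+1) -> (a <= b)%N -> f a <= f b.
Proof.
elim: b => [|b IH] H hab.
  by move: hab; rewrite leqn0 => /eqP ->.
move: hab; rewrite leq_eqVlt => /orP [/eqP -> //|]; rewrite ltnS => hab.
apply: le_trans (IH _ hab) (H b hab _) => // k h1 h2; apply: H => //; exact: ltnW.
Qed.

Lemma chain_down (f : nat -> R) a b :
  (forall k, (a <= k)%N -> (k < b)%N -> f k.+1 <= f k) -> (a <= b)%N -> f b <= f a.
Proof.
move=> H hab; rewrite -lerN2; apply: (@chain_up (fun k => - f k)) => // k h1 h2.
by rewrite lerN2; apply: H.
Qed.

Lemma in0n_nat n k : (k <= n)%N -> in0n n (k%:R : R).
Proof. by move=> h; split; rewrite ?ler0n // ler_nat. Qed.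

End Aux.
Arguments dd {R} g k.

Section Fwd.
Variable R : realType.
Implicit Types (g : R -> R).

Lemma fwd_concave n g cc (D : {set 'I_n}) : BR_set n g cc D -> concave_fun n g ->
  is_interval D /\ down_closed D.
Proof.
move=> HB Hc.
have dc : down_closed D.
  move=> a b ab /HB; rewrite br_iff => hb; apply/HB; rewrite br_iff.
  apply: le_trans hb _; apply: (@chain_down _ (dd g) a b); last exact: ltnW.
  move=> k ak kb; have := ltn_ord b => bn.
  by apply: conc_step Hc _ _; apply: in0n_nat; lia.
split=> // a b c ab bc _ hc.
move: bc; rewrite leq_eqVlt => /orP [/eqP eb|bc]; first by rewrite (val_inj eb).
exact: dc bc hc.
Qed.

Lemma fwd_convex n g cc (D : {set 'I_n}) : BR_set n g cc D -> convex_fun n g ->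
  is_interval D /\ up_closed D.
Proof.
move=> HB Hc.
have uc : up_closed D.
  move=> a b ab /HB; rewrite br_iff => ha; apply/HB; rewrite br_iff.
  apply: le_trans ha _; apply: (@chain_up _ (dd g) a b); last exact: ltnW.
  move=> k ak kb; have := ltn_ord b => bn.
  by apply: conv_step Hc _ _; apply: in0n_nat; lia.
split=> // a b c ab bc ha _.
move: ab; rewrite leq_eqVlt => /orP [/eqP eb|ab]; first by rewrite -(val_inj eb).
exact: uc ab ha.
Qed.

Lemma fwd_sigmoid n g cc (D : {set 'I_n}) : BR_set n g cc D -> sigmoid_fun n g ->
  is_interval D.
Proof.
move=> HB [zh [Hcv Hcc]] a b c ab bc /HB; rewrite br_iff => ha /HB; rewrite br_iff => hc.
apply/HB; rewrite br_iff.
move: ab; rewrite leq_eqVlt => /orP [/eqP eab|ab]; first by rewrite -(val_inj eab).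
move: bc; rewrite leq_eqVlt => /orP [/eqP ebc|bc]; first by rewrite (val_inj ebc).
have bn := ltn_ord b; have cn := ltn_ord c.
have Lcv : forall i j, (i <= j)%N -> ((j.+1)%:R%:E <= zh)%E -> (j < n)%N -> dd g i <= dd g j.
  move=> i j ij hj jn; apply: chain_up ij => k ik kj.
  apply: conv_step Hcv _ _; (split; [apply: in0n_nat; lia|]);
    (apply: le_trans _ hj; rewrite lee_fin ler_nat; lia).
have Lcc : forall i j, (i <= j)%N -> (zh <= i%:R%:E)%E -> (j < n)%N -> dd g j <= dd g i.
  move=> i j ij hi jn; apply: chain_down ij => k ik kj.
  apply: conc_step Hcc _ _; (split; [apply: in0n_nat; lia|]);
    (apply: le_trans hi _; rewrite lee_fin ler_nat; lia).
case: (boolP (((nat_of_ord b).+1)%:R%:E <= zh)%E) => h1.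
  exact: le_trans ha (Lcv _ _ (ltnW ab) h1 bn).
case: (boolP (zh <= (nat_of_ord b)%:R%:E)%E) => h2.
  exact: le_trans hc (Lcc _ _ (ltnW bc) h2 cn).
have [r er] : exists r, zh = r%:E.
  by case: zh {Hcv Hcc Lcv Lcc} h1 h2 => [r| |] h1 h2; [exists r| rewrite leey in h1| rewrite leNye in h2].
subst zh; rewrite lee_fin -ltNge in h1; rewrite lee_fin -ltNge in h2.
have d2 : cc <= dd g (nat_of_ord b).+1.
  apply: le_trans hc (Lcc _ _ bc _ cn); rewrite lee_fin; exact: ltW.
have Hmid2 := @conc_mid _ _ g r ((nat_of_ord b).+1)%:R ((nat_of_ord b).+2)%:R Hcc.
move: ab bn bc h1 h2 d2 Hmid2 Lcv; case: (nat_of_ord b) => [|b'] ab bn bc h1 h2 d2 Hmid2 Lcv.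
  by [].
have d1 : cc <= dd g b'.
  apply: le_trans ha (Lcv _ _ _ _ _); [lia| rewrite lee_fin; exact: ltW| lia].
have Hmid1 := @conv_mid _ _ g b'%:R (b'.+1)%:R r Hcv.
have Sr : in0n n r.
  split.
    apply: le_trans _ (ltW h2); exact: ler0n.
  apply: le_trans (ltW h1) _; rewrite ler_nat; (clear -ab bc bn cn; lia).
have Hm1 : g (b'.+1)%:R * (r - b'%:R) <= (r - (b'.+1)%:R) * g b'%:R + ((b'.+1)%:R - b'%:R) * g r.
  apply: Hmid1.
  - split; first by apply: in0n_nat; (clear -ab bc bn cn; lia).
    rewrite lee_fin; apply: le_trans _ (ltW h2); rewrite ler_nat; (clear -ab bc bn cn; lia).
  - by split; [exact: Sr| rewrite lee_fin].
  - by rewrite ltr_nat.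
  - exact: h2.
have Hm2 : ((b'.+3)%:R - (b'.+2)%:R) * g r + ((b'.+2)%:R - r) * g (b'.+3)%:R <= g (b'.+2)%:R * ((b'.+3)%:R - r).
  apply: Hmid2.
  - by split; [exact: Sr| rewrite lee_fin].
  - split; first by apply: in0n_nat; (clear -ab bc bn cn; lia).
    rewrite lee_fin; apply: le_trans (ltW h1) _; rewrite ler_nat; (clear -ab bc bn cn; lia).
  - exact: h1.
  - by rewrite ltr_nat.
move: d1 d2 h1 h2 Hm1 Hm2; rewrite /dd -!nat1r; set x := b'%:R.
set G0 := g x; set G1 := g (1 + x); set G2 := g (1 + (1 + x)); set G3 := g (1 + (1 + (1 + x))); set Gr := g r.
move=> d1 d2 h1 h2 Hm1 Hm2.
have p1 : 0 <= (r - (1 + x)) * (G1 - G0 - cc) by apply: mulr_ge0; lra.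
have p2 : 0 <= (1 + (1 + x) - r) * (G3 - G2 - cc) by apply: mulr_ge0; lra.
nra.
Qed.

End Fwd.

Lemma char_int n (D : {set 'I_n}) : is_interval D ->
  exists m p, (m <= p <= n)%N /\ forall z : 'I_n, z \in D <-> (m <= z < p)%N.
Proof.
move=> HI; case: (set_0Vmem D) => [->|[i0 hi0]].
  by exists 0%N, 0%N; split => // z; rewrite in_set0 ltn0 andbF.
case: (@arg_minnP _ i0 (fun i => i \in D) (fun i => nat_of_ord i) hi0) => mi Dmi minP.
case: (@arg_maxnP _ i0 (fun i => i \in D) (fun i => nat_of_ord i) hi0) => ma Dma maxP.
exists mi, ma.+1; split.
  have := minP i0 hi0; have := maxP i0 hi0; have := ltn_ord ma; lia.
move=> z; split.
  by move=> hz; have := minP z hz; have := maxP z hz; lia.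
by move=> /andP [h1 h2]; rewrite ltnS in h2; exact: HI mi z ma h1 h2 Dmi Dma.
Qed.

Lemma char_down n (D : {set 'I_n}) : down_closed D ->
  exists p, (p <= n)%N /\ forall z : 'I_n, z \in D <-> (z < p)%N.
Proof.
move=> HD; case: (set_0Vmem D) => [->|[i0 hi0]].
  by exists 0%N; split => // z; rewrite in_set0 ltn0.
case: (@arg_maxnP _ i0 (fun i => i \in D) (fun i => nat_of_ord i) hi0) => ma Dma maxP.
exists ma.+1; split; first exact: ltn_ord.
move=> z; split; first by move=> hz; have := maxP z hz; lia.
rewrite ltnS leq_eqVlt => /orP [/eqP e|h]; first by rewrite (val_inj e).
exact: HD h Dma.
Qed.

Lemma char_up n (D : {set 'I_n}) : up_closed D ->
  exists m, (m <= n)%N /\ forall z : 'I_n, z \in D <-> (m <= z)%N.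
Proof.
move=> HD; case: (set_0Vmem D) => [->|[i0 hi0]].
  by exists n; split => // z; rewrite in_set0 leqNgt ltn_ord.
case: (@arg_minnP _ i0 (fun i => i \in D) (fun i => nat_of_ord i) hi0) => mi Dmi minP.
exists mi; split; first exact: ltnW (ltn_ord mi).
move=> z; split; first by move=> hz; have := minP z hz; lia.
rewrite leq_eqVlt => /orP [/eqP e|h]; first by rewrite -(val_inj e).
exact: HD h Dmi.
Qed.

Section Conv.
Variable R : realType.

Definition Gf (m p : nat) (x : R) : R := Num.min (Num.max (x - m%:R) 0) (p%:R - m%:R).

Variables (m p : nat).
Hypothesis mp : (m <= p)%N.

Lemma mpR : (m%:R : R) <= p%:R. Proof. by rewrite ler_nat. Qed.

Lemma G_lo x : x <= m%:R -> Gf m p x = 0.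
Proof.
move=> h; have := mpR => h2; rewrite /Gf max_r; last lra.
by rewrite min_l //; lra.
Qed.

Lemma G_mid x : m%:R <= x -> x <= p%:R -> Gf m p x = x - m%:R.
Proof. by move=> h1 h2; rewrite /Gf max_l ?min_l //; lra. Qed.

Lemma G_hi x : p%:R <= x -> Gf m p x = p%:R - m%:R.
Proof. have := mpR => h; move=> h1; rewrite /Gf max_l ?min_r //; lra. Qed.

Lemma G_up x : m%:R <= x -> Gf m p x = Num.min (x - m%:R) (p%:R - m%:R).
Proof. by move=> h; rewrite /Gf max_l //; lra. Qed.

Lemma G_nondecr n : nondecr_on n (Gf m p).
Proof.
move=> x y _ xy _; rewrite /Gf le_min !ge_min lexx orbT andbT; apply/orP; left.
rewrite ge_max !le_max; apply/andP; split; apply/orP; [left; lra| right; lra].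
Qed.

Lemma G_nonneg n : nonneg_on n (Gf m p).
Proof.
have := mpR => h; move=> x _; rewrite /Gf le_min le_max lexx orbT /=; lra.
Qed.

Lemma G_br (z : nat) : best_response (Gf m p) 1 z <-> (m <= z < p)%N.
Proof.
rewrite br_iff /dd nat1r.
case: (ltnP z m) => h1 /=.
  rewrite !G_lo; last (rewrite ler_nat; lia); last (rewrite ler_nat; lia).
  by split => // h; lra.
case: (ltnP z p) => h2 /=.
  rewrite !G_mid; try (rewrite ler_nat; lia).
  rewrite -nat1r; split => // _; lra.
rewrite !G_hi; try (rewrite ler_nat; lia).
by split => // h; lra.
Qed.

Lemma G_conc_reg n : concave_on (fun z => in0n n z /\ m%:R <= z) (Gf m p).
Proof.
move=> x y t [_ hx] [_ hy] t0 t1.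
have w : m%:R <= t * x + (1 - t) * y by nra.
rewrite !G_up //.
set P := p%:R - m%:R.
have a1 : Num.min (x - m%:R) P <= x - m%:R by rewrite ge_min lexx.
have a2 : Num.min (x - m%:R) P <= P by rewrite ge_min lexx orbT.
have b1 : Num.min (y - m%:R) P <= y - m%:R by rewrite ge_min lexx.
have b2 : Num.min (y - m%:R) P <= P by rewrite ge_min lexx orbT.
set A := Num.min (x - m%:R) P in a1 a2 *; set B := Num.min (y - m%:R) P in b1 b2 *.
rewrite le_min; apply/andP; split; nra.
Qed.

Lemma G_sigmoid n : sigmoid_fun n (Gf m p).
Proof.
exists (m%:R)%:E; split.
  move=> x y t [_ hx] [_ hy] t0 t1; rewrite lee_fin in hx; rewrite lee_fin in hy.
  have w : t * x + (1 - t) * y <= m%:R by nra.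
  by rewrite !G_lo //; lra.
move=> x y t [hx0 hx] [hy0 hy] t0 t1; rewrite lee_fin in hx; rewrite lee_fin in hy.
exact: (@G_conc_reg n x y t (conj hx0 hx) (conj hy0 hy) t0 t1).
Qed.

Lemma G_concave0 n : m = 0%N -> concave_fun n (Gf m p).
Proof.
move=> m0 x y t [hx0 hx] [hy0 hy] t0 t1.
apply: (@G_conc_reg n x y t (conj (conj hx0 hx) _) (conj (conj hy0 hy) _) t0 t1); by rewrite m0.
Qed.

Lemma G_convexn n : p = n -> convex_fun n (Gf m p).
Proof.
move=> pn x y t [x0 xn] [y0 yn] t0 t1; have := mpR => hmp; subst p.
have Gv : forall u, 0 <= u -> u <= n%:R -> Gf m n u = Num.max (u - m%:R) 0.
  move=> u u0 un; rewrite /Gf min_l // ge_max; apply/andP; split; lra.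
have w0 : 0 <= t * x + (1 - t) * y by nra.
have w1 : t * x + (1 - t) * y <= n%:R by nra.
rewrite !Gv //.
have a1 : x - m%:R <= Num.max (x - m%:R) 0 by rewrite le_max lexx.
have a2 : 0 <= Num.max (x - m%:R) 0 by rewrite le_max lexx orbT.
have b1 : y - m%:R <= Num.max (y - m%:R) 0 by rewrite le_max lexx.
have b2 : 0 <= Num.max (y - m%:R) 0 by rewrite le_max lexx orbT.
set A := Num.max (x - m%:R) 0 in a1 a2 *; set B := Num.max (y - m%:R) 0 in b1 b2 *.
rewrite ge_max; apply/andP; split; nra.
Qed.

Lemma concave_sub (S S' : R -> Prop) g : concave_on S g -> (forall z, S' z -> S z) -> concave_on S' g.
Proof. by move=> H HS x y t hx hy t0 t1; exact: H (HS _ hx) (HS _ hy) t0 t1. Qed.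

Lemma convex_sub (S S' : R -> Prop) g : convex_on S g -> (forall z, S' z -> S z) -> convex_on S' g.
Proof. by move=> H HS x y t hx hy t0 t1; exact: H (HS _ hx) (HS _ hy) t0 t1. Qed.

End Conv.


Section Gen.
Variable R : realType.
Variables (n : nat) (D : {set 'I_n}).

Definition Sf (x : R) : R := \sum_(k < n | k \in D) (if (k.+1)%:R <= x then 1 else 0).

Lemma Sf_nondecr : nondecr_on n Sf.
Proof.
move=> x y _ xy _; apply: ler_sum => k _.
case: ifP => h1; case: ifP => h2 //; first by have := le_trans h1 xy; rewrite h2.
Qed.

Lemma Sf_nonneg : nonneg_on n Sf.
Proof. by move=> x _; apply: sumr_ge0 => k _; case: ifP. Qed.

Lemma Sf_br : BR_set n Sf 1 D.
Proof.
move=> z; rewrite br_iff /dd /Sf -sumrB nat1r.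
rewrite (eq_bigr (fun k : 'I_n => ((k == z)%:R : R))); last first.
  move=> k _; rewrite !ler_nat ltnS -val_eqE /=.
  by case: ltngtP => _; rewrite ?subrr ?subr0.
case: (boolP (z \in D)) => hz.
  rewrite (bigD1 z) //= eqxx big1 ?addr0; first by split.
  by move=> k /andP [_ hk]; rewrite (negbTE hk).
rewrite big1; first by split => // h; lra.
by move=> k hk; case: eqP => // e; subst k; rewrite hk in hz.
Qed.

End Gen.

Lemma G_BR (R : realType) n m p (D : {set 'I_n}) : (m <= p)%N ->
  (forall z : 'I_n, z \in D <-> (m <= z < p)%N) -> BR_set n (Gf R m p) 1 D.
Proof.
move=> mp hD z; apply: iff_trans (@G_br R m p mp z) _; apply: iff_sym; exact: hD.
Qed.

Theorem lemma2p3 (R : realType) (n : nat) (hn : (1 <= n)%N) :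
  (* forward direction *)
  (forall (g : R -> R) (c : R), nondecr_on n g -> nonneg_on n g ->
     (exists! D : {set 'I_n}, BR_set n g c D) /\
     (forall D : {set 'I_n}, BR_set n g c D ->
        (concave_fun n g -> is_interval D /\ down_closed D) /\
        (convex_fun n g -> is_interval D /\ up_closed D) /\
        (sigmoid_fun n g -> is_interval D))) /\
  (* converse direction *)
  (forall D : {set 'I_n},
     (exists (g : R -> R) (c : R),
        nondecr_on n g /\ nonneg_on n g /\ BR_set n g c D) /\
     (is_interval D /\ down_closed D ->
        exists (g : R -> R) (c : R),
          nondecr_on n g /\ nonneg_on n g /\ concave_fun n g /\ BR_set n g c D) /\
     (is_interval D /\ up_closed D ->
        exists (g : R -> R) (c : R),
          nondecr_on n g /\ nonneg_on n g /\ convex_fun n g /\ BR_set n g c D) /\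
     (is_interval D ->
        exists (g : R -> R) (c : R),
          nondecr_on n g /\ nonneg_on n g /\ sigmoid_fun n g /\ BR_set n g c D)).
Proof.
split.
- move=> g c Hnd Hnn; split.
  + exists [set z : 'I_n | g z%:R <= g (1 + z%:R) - c]; split.
      by move=> z; rewrite inE.
    move=> D' HD'; apply/setP => z; rewrite inE; apply/idP/idP => h.
      exact: (HD' z).1 h.
    exact: (HD' z).2 h.
  + move=> D HD; split; [move=> Hc; exact: fwd_concave HD Hc|].
    split; [move=> Hc; exact: fwd_convex HD Hc| move=> Hs; exact: fwd_sigmoid HD Hs].
- move=> D; split.
    exists (@Sf R n D), 1; split; [exact: Sf_nondecr| split; [exact: Sf_nonneg| exact: Sf_br]].
  split.
    move=> [_ dc]; have [p [pn hp]] := @char_down n D dc.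
    have mp : (0 <= p)%N by [].
    exists (Gf R 0 p), 1; split; [exact: G_nondecr| split; [exact: G_nonneg| split]].
      exact: G_concave0.
    apply: G_BR mp _ => z; rewrite hp; done.
  split.
    move=> [_ uc]; have [m [mn hm]] := @char_up n D uc.
    exists (Gf R m n), 1; split; [exact: G_nondecr| split; [exact: G_nonneg| split]].
      exact: G_convexn.
    apply: G_BR mn _ => z; rewrite hm (ltn_ord z) andbT; done.
  move=> HI; have [m [p [mpn hmp]]] := @char_int n D HI.
  have mp : (m <= p)%N by case/andP: mpn.
  exists (Gf R m p), 1; split; [exact: G_nondecr| split; [exact: G_nonneg| split]].
    exact: G_sigmoid.
  exact: G_BR mp hmp.
Qed.
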